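(* Let $\mathbf{A}\in\mathbb{R}^{n\times n}$ be positive semidefinite and let $\mathbf{u}\in\mathbb{R}^n$ satisfy $\mathbf{u}\not\perp\mathrm{Ker}(\mathbf{A})$. Then $\mathrm{Det}(\mathbf{A}+\mathbf{u}\mathbf{u}^\top)\ge\lambda_{\min}(\mathbf{A}+\mathbf{u}\mathbf{u}^\top)\,\mathrm{Det}(\mathbf{A})$.
   Context: $\mathrm{Det}(\mathbf{M})$ is the product of the nonzero eigenvalues of $\mathbf{M}$ (with $\mathrm{Det}(\mathbf{O})=1$). $\lambda_{\min}(\mathbf{M})$ denotes the smallest nonzero eigenvalue of $\mathbf{M}$. $\mathbf{u}\not\perp\mathrm{Ker}(\mathbf{A})$ means there is $\mathbf{y}\in\mathrm{Ker}(\mathbf{A})$ with $\mathbf{u}^\top\mathbf{y}\ne0$. *)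

(* Defs.v *)
From HB Require Import structures.
From mathcomp Require Import all_boot all_order all_algebra.
Set Implicit Arguments. Unset Strict Implicit. Unset Printing Implicit Defensive.
Import Order.TTheory GRing.Theory Num.Theory.
Local Open Scope ring_scope.

Definition psd (R : realFieldType) (n : nat) (A : 'M[R]_n) : Prop :=
  A^T = A /\ forall x : 'cV[R]_n, 0 <= (x^T *m A *m x) 0 0.

Definition eigenvalues_list (R : comNzRingType) (n : nat) (M : 'M[R]_n) (s : seq R) : Prop :=
  char_poly M = \prod_(x <- s) ('X - x%:P).

(* Det(M): product of the nonzero eigenvalues (1 if none). *)
Definition pdet (R : numDomainType) (s : seq R) : R := \prod_(x <- s | x != 0) x.

(* lambda_min(M): smallest nonzero eigenvalue (0 by convention if none). *)
Definition lmin_nz (R : realDomainType) (s : seq R) : R :=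
  head 0 (sort <=%R [seq x <- s | x != 0]).

Definition not_perp_ker (R : pzRingType) (n : nat) (A : 'M[R]_n) (u : 'cV[R]_n) : Prop :=
  exists y : 'cV[R]_n, A *m y = 0 /\ (u^T *m y) 0 0 != 0.

(* Main.v *)
Require Import Defs.
From HB Require Import structures.
From mathcomp Require Import all_boot all_order all_algebra.
From mathcomp Require Import ring zify.
Set Implicit Arguments. Unset Strict Implicit. Unset Printing Implicit Defensive.
Import Order.TTheory GRing.Theory Num.Theory.
Local Open Scope ring_scope.
Lemma det_rank1 (T : idomainType) k (M : 'M[T]_k) (U : 'cV[T]_k) :
  \det M != 0 -> \det (M - U *m U^T) = \det M - (U^T *m \adj M *m U) 0 0.
Proof.
move=> dM0.
pose N := block_mx (1%:M : 'M[T]_1) U^T U M.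
have h1 : \det N = \det (M - U *m U^T).
  have -> : N = block_mx 1%:M 0 U 1%:M *m block_mx 1%:M U^T 0 (M - U *m U^T).
    rewrite mulmx_block !mul1mx !mul0mx ?mulmx0 !mulmx1 ?addr0 ?add0r. idtac.
    by rewrite addrC subrK.
  by rewrite det_mulmx det_lblock det_ublock !det1 !mul1r.
have h2 : \det N * \det M = (\det M - (U^T *m \adj M *m U) 0 0) * \det M.
  have : N *m block_mx ((\det M)%:M : 'M_1) 0 (- (\adj M *m U)) 1%:M =
      block_mx ((\det M)%:M - U^T *m \adj M *m U) U^T 0 M.
    rewrite mulmx_block ?mul1mx ?mulmx0 ?mulmx1 ?add0r ?addr0.
    rewrite !mulmxN !mulmxA mul_mx_adj scalar_mxC subrr.
    done.
  move/(congr1 determinant); rewrite det_mulmx det_lblock det_ublock det1 mulr1.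
  by rewrite !det_mx11 !mxE /= mulr1n.
rewrite -h1; exact: (mulIf dM0).
Qed.

Section Basic.
Variable R : realFieldType.
Implicit Types s : seq R.




Definition nzpoly s := \prod_(x <- s | x != 0) ('X - x%:P).

Lemma prod_split s : \prod_(x <- s) ('X - x%:P) = 'X^(count (pred1 0) s) * nzpoly s.
Proof.
rewrite /nzpoly; elim: s => [|x s IH]; first by rewrite !big_nil expr0 mulr1.
rewrite !big_cons IH /=; case: eqP => [->|_] /=.
  by rewrite subr0 add1n exprS mulrA.
by rewrite add0n mulrCA.
Qed.

Lemma nzpoly0 s : (nzpoly s).[0] = (-1) ^+ (count (predC1 0) s) * pdet s.
Proof.
rewrite /nzpoly /pdet; elim: s => [|x s IH]; first by rewrite !big_nil hornerC mulr1.
rewrite !big_cons /=; case: eqP => [_|_] /=; first by rewrite add0n.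
by rewrite hornerM IH hornerXsubC add1n exprS sub0r mulrACA mulN1r.
Qed.

Lemma pdet_neq0 s : pdet s != 0.
Proof. by rewrite /pdet prodf_seq_neq0; apply/allP => x _; case: (x != 0). Qed.

Lemma uniq_split (c j : nat) (g h : {poly R}) : 'X^c * g = 'X^j * h ->
  g.[0] != 0 -> h.[0] != 0 -> c = j /\ g = h.
Proof.
wlog le_cj : c j g h / (c <= j)%N.
  move=> W E g0 h0; case: (leqP c j) => [le|/ltnW le]; first exact: W.
  by have [-> ->] := W _ _ _ _ le (esym E) h0 g0.
move=> E g0 h0.
have E2 : g = 'X^(j - c) * h.
  apply: (mulfI (expf_neq0 c (negbT (polyX_eq0 R)))).
  by rewrite E mulrA -exprD subnKC.
case: (posnP (j - c)) => jc.
  by move: E2; rewrite jc expr0 mul1r => ->; split=> //; apply/eqP; rewrite eqn_leq le_cj /= -subn_eq0 jc.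
by move: g0; rewrite E2 hornerM hornerXn expr0n (gtn_eqF jc) mul0r eqxx.
Qed.



Lemma dot_ge0 k (x : 'cV[R]_k) : 0 <= (x^T *m x) 0 0.
Proof.
rewrite mxE; apply: sumr_ge0 => i _; rewrite mxE; exact: sqr_ge0.
Qed.

Lemma dot_eq0 k (x : 'cV[R]_k) : (x^T *m x) 0 0 = 0 -> x = 0.
Proof.
rewrite mxE => /psumr_eq0P H.
have {}H : forall i, x^T 0 i * x i 0 = 0.
  by move=> i; apply: H => // l _; rewrite mxE; exact: sqr_ge0.
apply/matrixP => i j; rewrite (ord1 j) mxE.
by have /eqP := H i; rewrite mxE -expr2 sqrf_eq0 => /eqP.
Qed.

Lemma kc1 k (M : 'M[R]_k) (v : 'cV[R]_k) : M^T = M -> M *m (M *m v) = 0 -> M *m v = 0.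
Proof.
move=> sM H; apply: dot_eq0.
by rewrite trmx_mul sM -mulmxA H mulmx0 mxE.
Qed.

Lemma kcn k (M : 'M[R]_k.+1) (v : 'cV[R]_k.+1) j : M^T = M ->
  (M ^+ j.+1) *m v = 0 -> M *m v = 0.
Proof.
move=> sM; elim: j v => [|j IH] v; first by rewrite expr1.
move=> H; apply: (kc1 sM); apply: IH.
have E : M ^+ j.+1 *m M = M ^+ j.+2 by rewrite [RHS]exprSr.
by rewrite mulmxA E.
Qed.


Lemma mulmxR k (M N : 'M[R]_k.+1) (y : 'cV[R]_k.+1) : (M * N) *m y = M *m (N *m y).
Proof. by rewrite mulmxA. Qed.

Lemma hmXsubC k (C : 'M[R]_k.+1) a : horner_mx C ('X - a%:P) = C - a%:M.
Proof. by rewrite rmorphB /= horner_mx_X horner_mx_C. Qed.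

Lemma symB k (C : 'M[R]_k) a : C^T = C -> (C - a%:M)^T = C - a%:M.
Proof. by move=> sC; rewrite linearB /= sC tr_scalar_mx. Qed.

Lemma GL k (C : 'M[R]_k.+1) : C^T = C -> forall (t : seq R) (y : 'cV[R]_k.+1),
  all (fun a => 0 <= a) t ->
  horner_mx C (\prod_(a <- t) ('X - a%:P)) *m y = 0 -> 0 <= (y^T *m C *m y) 0 0.
Proof.
move=> sC t; have [N] := ubnP (size t); elim: N t => [//|N IH] [|a t1] //= St y.
  by rewrite big_nil rmorph1 mul1mx => _ ->; rewrite mulmx0 mxE.
rewrite ltnS in St; case/andP => a0 t10; rewrite big_cons rmorphM /= hmXsubC mulmxR.
have [at1|nat1] := boolP (a \in t1).
  rewrite (perm_big _ (perm_to_rem at1)) big_cons rmorphM /= hmXsubC mulmxR => H.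
  have H2 := kc1 (symB a sC) H.
  apply: (IH (a :: rem a t1)) => /=.
  - rewrite size_rem // prednK //; by case: (t1) at1.
  - by rewrite a0 /=; apply/allP => x /mem_rem xt; exact: (allP t10).
  - by rewrite big_cons rmorphM /= hmXsubC mulmxR.
move=> H.
set g1 := \prod_(a <- t1) ('X - a%:P) in H.
have ga0 : g1.[a] != 0 by rewrite -/(root g1 a) root_prod_XsubC.
have /factor_theorem [q Eq] : root (g1 - (g1.[a])%:P) a.
  by rewrite /root hornerD hornerN hornerC subrr.
set ga := g1.[a] in ga0 Eq.
pose y2 := ga^-1 *: (horner_mx C g1 *m y).
pose w1 := - ga^-1 *: (horner_mx C q *m y).
pose y1 := y - y2.
have Cy2 : (C - a%:M) *m y2 = 0 by rewrite /y2 -scalemxAr H scaler0.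
have y1E : y1 = (C - a%:M) *m w1.
  rewrite /y1 /y2 /w1 -scalemxAr -mulmxR -hmXsubC -rmorphM /= mulrC -Eq.
  rewrite rmorphB /= horner_mx_C mulmxBl scalerBr mul_scalar_mx scalerA.
  by rewrite mulNr mulVf // scaleN1r opprK addrC scaleNr.
have g1y1 : horner_mx C g1 *m y1 = 0.
  have comm p1 p2 p3 : horner_mx C p1 *m (horner_mx C p2 *m (horner_mx C p3 *m y))
      = horner_mx C (p1 * p2 * p3) *m y by rewrite !rmorphM /= !mulmxR.
  rewrite y1E /w1 -!scalemxAr -hmXsubC comm.
  by rewrite [g1 * _]mulrC [_ * q]mulrC mulrA -comm hmXsubC H mulmx0 scaler0.
have IH1 := IH t1 St y1 t10 g1y1.
have Cy2' : C *m y2 = a *: y2.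
  by apply/eqP; rewrite -subr_eq0 -mul_scalar_mx -mulmxBl Cy2.
have orth : y1^T *m y2 = 0.
  by rewrite y1E trmx_mul symB // -mulmxA Cy2 mulmx0.
have y2C : y2^T *m C = a *: y2^T.
  by rewrite -{1}sC -trmx_mul Cy2' linearZ.
have yE : y = y1 + y2 by rewrite /y1 subrK.
clearbody y1 y2.
have E : y^T *m C *m y = y1^T *m C *m y1 + a *: (y2^T *m y2).
  rewrite yE.
  rewrite [(y1 + y2)^T]linearD /= !mulmxDl !mulmxDr -!mulmxA Cy2' -!scalemxAr orth.
  have orth2 : y2^T *m y1 = 0 by rewrite -[y1]trmxK -trmx_mul orth trmx0.
  by rewrite !mulmxA y2C -!scalemxAl orth2 !scaler0 addr0 add0r.
rewrite E mxE [X in _ + X]mxE; apply: addr_ge0 => //.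
by apply: mulr_ge0 => //; exact: dot_ge0.
Qed.

Lemma Rayleigh k (B : 'M[R]_k.+1) (s : seq R) (mu : R) (y w : 'cV[R]_k.+1) :
  B^T = B -> char_poly B = \prod_(x <- s) ('X - x%:P) ->
  (forall x, x \in s -> x != 0 -> mu <= x) -> y = B *m w ->
  mu * (y^T *m y) 0 0 <= (y^T *m B *m y) 0 0.
Proof.
move=> sB cB muP yE.
have CH := Cayley_Hamilton B; rewrite cB prod_split rmorphM rmorphXn /= horner_mx_X in CH.
set g := nzpoly s in CH.
pose v := horner_mx B g *m y.
have Bv : B ^+ (count (pred1 0) s) *m v = 0 by rewrite /v -mulmxR CH mul0mx.
have vE : v = B *m (horner_mx B g *m w).
  rewrite /v yE !mulmxA; congr (_ *m _).
  have := congr1 (horner_mx B) (mulrC g 'X).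
  by rewrite !rmorphM /= horner_mx_X.
have v0 : v = 0.
  move: Bv; case: (count _ s) => [|c]; first by rewrite expr0 mul1mx.
  move/(kcn sB) => Bv0; apply: dot_eq0.
  by rewrite {1}vE trmx_mul sB -mulmxA Bv0 mulmx0 mxE.
pose t := [seq x - mu | x <- [seq x <- s | x != 0]].
have tP : all (fun a => 0 <= a) t.
  apply/allP => a /mapP [x]; rewrite mem_filter => /andP [x0 xs] ->.
  by rewrite subr_ge0 muP.
have G : horner_mx (B - mu%:M) (\prod_(a <- t) ('X - a%:P)) *m y = 0.
  rewrite -v0 /v /g /nzpoly !rmorph_prod /=.
  congr (_ *m _); rewrite /t big_map big_filter; apply: eq_bigr => x _.
  rewrite !hmXsubC.
  by rewrite rmorphB /= opprB addrA subrK.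
have := GL (symB mu sB) tP G.
by rewrite mulmxBr mulmxBl mul_mx_scalar -scalemxAl !mxE subr_ge0.
Qed.
End Basic.

Section Adj.
Variable R : realFieldType.

Lemma adjK k (A : 'M[R]_k) :
  \adj (char_poly_mx A) *m map_mx polyC A =
  'X *: \adj (char_poly_mx A) - char_poly A *: 1%:M.
Proof.
have := mul_adj_mx (char_poly_mx A).
rewrite /char_poly_mx mulmxBr mul_mx_scalar => /eqP; rewrite subr_eq => /eqP ->.
by rewrite -/(char_poly A) scalemx1 addrAC subrr add0r.
Qed.

Lemma adjX k (A : 'M[R]_k.+1) j : exists S : 'M[{poly R}]_k.+1,
  \adj (char_poly_mx A) *m map_mx polyC (A ^+ j) =
  'X^j *: \adj (char_poly_mx A) - char_poly A *: S.
Proof.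
elim: j => [|j [S IH]].
  exists 0; rewrite expr0 map_mx1 mulmx1 scaler0 subr0 expr0 scale1r //.
exists ('X^j *: 1%:M + S *m map_mx polyC A).
rewrite exprSr map_mxM mulmxA IH mulmxBl -!scalemxAl adjK.
rewrite scalerBr scalerA -exprSr scalerA mulrC -scalerA.
by rewrite scalerDr opprD addrA scalemxAl.
Qed.

Lemma adjY k (A : 'M[R]_k) (y : 'cV[R]_k) m f : A *m y = 0 ->
  char_poly A = 'X^(m.+1) * f ->
  \adj (char_poly_mx A) *m map_mx polyC y = ('X^m * f) *: map_mx polyC y.
Proof.
move=> Ay cA.
have E : \adj (char_poly_mx A) *m (char_poly_mx A *m map_mx polyC y) =
    char_poly A *: map_mx polyC y.
  by rewrite mulmxA mul_adj_mx mul_scalar_mx.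
have My : char_poly_mx A *m map_mx polyC y = 'X *: map_mx polyC y.
  by rewrite /char_poly_mx mulmxBl -map_mxM Ay map_mx0 subr0 mul_scalar_mx.
rewrite My -scalemxAr cA exprS -mulrA -scalerA in E.
apply/matrixP => i j; move/matrixP/(_ i j): E; rewrite !mxE.
by apply: mulfI; rewrite polyX_eq0.
Qed.

End Adj.

Section Misc.
Variable R : rcfType.

Lemma lmin_le (s : seq R) x : x \in s -> x != 0 -> lmin_nz s <= x.
Proof.
move=> xs x0; rewrite /lmin_nz.
have : x \in sort <=%R [seq x <- s | x != 0] by rewrite mem_sort mem_filter x0.
have := sort_sorted (@le_total _ R) [seq x <- s | x != 0].
case: (sort _ _) => [//|h t] /= st; rewrite inE => /orP [/eqP -> //|xt].
by have /allP := order_path_min (@le_trans _ R) st; apply.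
Qed.

Lemma symX k (A : 'M[R]_k.+1) j : A^T = A -> (A ^+ j)^T = A ^+ j.
Proof.
move=> sA; elim: j => [|j IH]; first by rewrite expr0 trmx1.
by rewrite {1}exprS -[_ * _]/(A *m _) trmx_mul IH sA [RHS]exprSr.
Qed.

Lemma rowkill k (A : 'M[R]_k.+1) (w : 'rV[R]_k.+1) j : w *m A = 0 -> w *m A ^+ j.+1 = 0.
Proof.
move=> wA; elim: j => [|j IH]; first by rewrite expr1.
by rewrite exprSr -[_ * A]/(_ *m A) mulmxA IH mul0mx.
Qed.

Lemma eig_ge0 k (A : 'M[R]_k) (s : seq R) x : psd A -> eigenvalues_list A s ->
  x \in s -> 0 <= x.
Proof.
move=> [sA qA] EA xs.
have : eigenvalue A x by rewrite eigenvalue_root_char EA root_prod_XsubC.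
move/eigenvalueP => [v vA v0].
have := qA v^T; rewrite trmxK vA -scalemxAl mxE.
have := dot_ge0 v^T; rewrite trmxK => d0.
have dpos : 0 < (v *m v^T) 0 0.
  rewrite lt0r d0 andbT; apply/eqP => H.
  have := @dot_eq0 _ _ v^T; rewrite trmxK => /(_ H) vT0.
  by rewrite -[v]trmxK vT0 trmx0 eqxx in v0.
by rewrite pmulr_lge0.
Qed.

Lemma pdet_ge0 k (A : 'M[R]_k) (s : seq R) : psd A -> eigenvalues_list A s ->
  0 <= pdet s.
Proof.
move=> pA EA; rewrite /pdet big_seq_cond; apply: prodr_ge0 => x /andP [xs _].
exact: eig_ge0 pA EA xs.
Qed.
End Misc.

Theorem mainTheorem7 (R : rcfType) (n : nat) (A : 'M[R]_n) (u : 'cV[R]_n)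
    (sA sB : seq R) :
  psd A -> not_perp_ker A u ->
  eigenvalues_list A sA -> eigenvalues_list (A + u *m u^T) sB ->
  pdet sB >= lmin_nz sB * pdet sA.
Proof.
move=> pA [z [Az uz]] EA EB.
destruct n as [|n].
  by move: uz; rewrite mxE big_ord0 eqxx.
have [sA_T qA] := pA.
set B := A + u *m u^T in EB.
set m := count (pred1 0) sA.
set f := nzpoly sA.
have cA : char_poly A = 'X^m * f by rewrite EA prod_split.
have f0 : f.[0] = (-1) ^+ (count (predC1 0) sA) * pdet sA by exact: nzpoly0.
have f0n : f.[0] != 0 by rewrite f0 mulf_neq0 ?signr_eq0 ?pdet_neq0.
have z0 : z != 0 by apply: contraNneq uz => ->; rewrite mulmx0 mxE.
have m0 : (0 < m)%N.
  have : eigenvalue A 0.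
    apply/eigenvalueP; exists z^T; last by rewrite trmx_eq0.
    by rewrite scale0r -sA_T -trmx_mul Az trmx0.
  rewrite eigenvalue_root_char EA root_prod_XsubC => z0s.
  by rewrite /m -has_count; apply/hasP; exists 0 => //=.
have [m' mE] : exists m', m = m'.+1 by case: (m) m0 => // m' _; exists m'.
rewrite mE in cA.
have cop : coprimep ('X ^+ m'.+1) f.
  by apply: coprimep_expl; rewrite coprimep_sym coprimepX /root.
have [[a b] /= Eab] := Bezout_eq1_coprimepP _ _ cop.
rewrite mulrC [b * f]mulrC in Eab.
pose y := horner_mx A (f * b) *m u.
pose v := horner_mx A a *m u.
have uE : u = A ^+ m'.+1 *m v + y.
  have := congr1 (horner_mx A) Eab; rewrite rmorphD rmorphM rmorph1 /= rmorphXn /= horner_mx_X.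
  move=> H; rewrite /v /y mulmxA -mulmxDl.
  have -> : A ^+ m'.+1 *m horner_mx A a + horner_mx A (f * b) = 1%:M by exact: H.
  by rewrite mul1mx.
have Ay : A *m y = 0.
  apply: (kcn (j := m') sA_T).
  rewrite /y mulmxA.
  have -> : A ^+ m'.+1 *m horner_mx A (f * b) = A ^+ m'.+1 * horner_mx A (f * b) by [].
  by rewrite -{1}(horner_mx_X A) -rmorphXn -rmorphM mulrA -cA rmorphM /= Cayley_Hamilton mul0r mul0mx.
have colkill (x : 'cV[R]_n.+1) j : A *m x = 0 -> A ^+ j.+1 *m x = 0.
  by move=> Ax; rewrite exprSr -[_ * A]/(_ *m A) -mulmxA Ax mulmx0.
have yA : y^T *m A = 0 by rewrite -sA_T -trmx_mul Ay trmx0.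
have zA : z^T *m A = 0 by rewrite -sA_T -trmx_mul Az trmx0.
have sAm : (A ^+ m'.+1)^T = A ^+ m'.+1 by exact: symX.
have WT (x : 'cV[R]_n.+1) : A *m x = 0 -> (A ^+ m'.+1 *m v)^T *m x = 0.
  by move=> Ax; rewrite trmx_mul sAm -mulmxA colkill // mulmx0.
have uzE : u^T *m z = y^T *m z by rewrite {1}uE linearD /= mulmxDl WT // add0r.
pose c0 := (y^T *m y) 0 0.
have c0pos : 0 < c0.
  rewrite lt0r dot_ge0 andbT; apply/eqP => /dot_eq0 y0.
  by move: uz; rewrite uzE y0 trmx0 mul0mx mxE eqxx.
have uyE : u^T *m y = c0%:M.
  by rewrite {1}uE linearD /= mulmxDl WT // add0r [LHS]mx11_scalar.
have symB_ : B^T = B by rewrite /B linearD /= trmx_mul trmxK sA_T.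
have By : B *m y = c0 *: u.
  by rewrite /B mulmxDl Ay add0r -mulmxA uyE mul_mx_scalar.
pose v2 := A ^+ m' *m v.
pose t := (u^T *m v2) 0 0.
pose w := (c0^-1 * (1 + t)) *: y - v2.
have yBw : y = B *m w.
  rewrite /w mulmxBr -scalemxAr By scalerA mulrAC mulVf ?lt0r_neq0 // mul1r.
  rewrite /B mulmxDl -mulmxA [u^T *m v2]mx11_scalar mul_mx_scalar -/t.
  have Av2 : A *m v2 = A ^+ m'.+1 *m v by rewrite /v2 mulmxA exprS.
  rewrite Av2 scalerDl scale1r opprD addrACA subrr addr0.
  by rewrite {1}uE addrC addKr.
have mu_le : lmin_nz sB <= c0.
  have := Rayleigh symB_ EB (@lmin_le _ sB) yBw.
  rewrite -mulmxA By -scalemxAr [X in _ <= X]mxE.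
  have -> : (y^T *m u) 0 0 = c0 by rewrite -[y^T *m u]trmxK trmx_mul trmxK uyE tr_scalar_mx mxE.
  by rewrite ler_pM2r.
pose U := map_mx polyC u.
pose Y := map_mx polyC y.
pose W := map_mx polyC (A ^+ m'.+1 *m v).
pose K := \adj (char_poly_mx A).
have UE : U = W + Y by rewrite /U {1}uE map_mxD.
have cBE : char_poly_mx B = char_poly_mx A - U *m U^T.
  by rewrite /char_poly_mx /B map_mxD map_mxM map_trmx opprD addrA.
have dA : \det (char_poly_mx A) != 0 by exact: (monic_neq0 (char_poly_monic A)).
have chB : char_poly B = char_poly A - (U^T *m K *m U) 0 0.
  by rewrite /char_poly cBE det_rank1.
have KY : K *m Y = ('X^m' * f) *: Y by exact: adjY Ay cA.
have symM : (char_poly_mx A)^T = char_poly_mx A.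
  by rewrite /char_poly_mx linearB /= tr_scalar_mx map_trmx sA_T.
have KT : K^T = K by rewrite /K trmx_adj symM.
have YK : Y^T *m K = ('X^m' * f) *: Y^T.
  by rewrite -KT -trmx_mul KY linearZ.
have WY : W^T *m Y = 0 by rewrite /W /Y map_trmx -map_mxM WT // map_mx0.
have YW : Y^T *m W = 0.
  by rewrite -[W]trmxK -trmx_mul WY trmx0.
have YY : Y^T *m Y = (c0%:P)%:M.
  by rewrite /Y map_trmx -map_mxM [y^T *m y]mx11_scalar map_scalar_mx.
have [S HS] := adjX A m'.+1.
pose V := map_mx polyC v.
pose P := map_mx polyC (A ^+ m'.+1).
have WE : W = P *m V by rewrite /W /P /V map_mxM.
have WTE : W^T = V^T *m P by rewrite WE trmx_mul /P /V !map_trmx sAm.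
pose Z := V^T *m (P *m K - f *: (P *m S)) *m V.
have WKW : W^T *m K *m W = 'X^(m'.+1) *: Z.
  rewrite WTE WE -!mulmxA (mulmxA K) /K /P HS -/K -/P /Z cA.
  by rewrite !(mulmxBl, mulmxBr) -!scalemxAl -!scalemxAr !mulmxA scalerBr -scalemxAl scalerA.
have UKU : (U^T *m K *m U) 0 0 = 'X^m' * f * c0%:P + 'X^(m'.+1) * Z 0 0.
  rewrite UE [(W + Y)^T]linearD /= !mulmxDl !mulmxDr WKW.
  rewrite -[W^T *m K *m Y]mulmxA KY -scalemxAr WY scaler0 YK -!scalemxAl YW scaler0 YY.
  by rewrite addr0 add0r !mxE eqxx mulr1n addrC.
set r := Z 0 0 in UKU.
pose h := 'X * f - f * c0%:P - 'X * r.
have chB2 : char_poly B = 'X^m' * h by rewrite chB UKU cA /h exprS; ring.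
have h0 : h.[0] = - (f.[0] * c0) by rewrite /h !hornerE; ring.
have hn0 : h.[0] != 0 by rewrite h0 oppr_eq0 mulf_neq0 // lt0r_neq0.
have nB0 : (nzpoly sB).[0] != 0 by rewrite nzpoly0 mulf_neq0 ?signr_eq0 ?pdet_neq0.
have [cntB hE] := uniq_split (esym (etrans (esym chB2) (etrans EB (prod_split sB)))) nB0 hn0.
have := nzpoly0 sB; rewrite hE h0 f0.
have szA : size sA = n.+1.
  by have := size_char_poly A; rewrite EA size_prod_XsubC => -[].
have szB : size sB = n.+1.
  by have := size_char_poly B; rewrite EB size_prod_XsubC => -[].
have cnt (s : seq R) : (count (pred1 (0%R : R)) s + count (predC1 (0%R : R)) s)%N = size s.
  by rewrite -(count_predC (pred1 (0%R : R))); congr (_ + _)%N; apply: eq_count.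
have kE : count (predC1 0) sB = (count (predC1 0) sA).+1.
  by have := cnt sA; have := cnt sB; rewrite -/m mE cntB szA szB => h1; rewrite addSn -h1 -addnS => /addnI ->.
rewrite kE exprS mulN1r -mulNr => H.
have PBE : pdet sB = c0 * pdet sA.
  apply: (@mulfI _ ((-1) ^+ count (predC1 0) sA)); first by rewrite signr_eq0.
  apply: oppr_inj; rewrite -mulNr -H; ring.
by rewrite PBE; apply: (ler_wpM2r (pdet_ge0 pA EA)) mu_le.
Qed.
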